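(* Let $P=\{p_1,\dots,p_n\}\subset\mathbb{R}^2$ be in general position and let $f\in\mathbb{R}^{\binom n2}$ be arbitrary. Then $X_f(P)$ is bounded.
   Context: General position: no three points collinear. Infinitesimal motions $v\in(\mathbb{R}^2)^n$ are normalized by $v_1^1=v_1^2=v_2^1=0$ (with $p_1,p_2$ having different $y$-coordinates). $\bar X_f(P)$ is the set of normalized $v$ with $\langle p_i-p_j,v_i-v_j\rangle\ge f_{ij}$ for all $i<j$, and $X_f(P)$ is the subset of $\bar X_f(P)$ on which these inequalities hold with equality for every pair $ij$ that is an edge of the boundary of the convex hull of $P$. *)

(* Defs.v *)
From HB Require Import structures.
From mathcomp Require Import all_boot all_order all_algebra.
From mathcomp Require Import reals.
Set Implicit Arguments. Unset Strict Implicit. Unset Printing Implicit Defensive.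
Import Order.TTheory GRing.Theory Num.Theory.
Local Open Scope ring_scope.

(* Points of R^2 and infinitesimal velocities are pairs (x, y):
   component .1 is the x-coordinate (superscript 1), .2 the y-coordinate. *)
Section Defs.
Variable R : realType.

Definition dot2 (a b : R * R) : R := a.1 * b.1 + a.2 * b.2.
Definition sub2 (a b : R * R) : R * R := (a.1 - b.1, a.2 - b.2).

Definition orient (a b c : R * R) : R :=
  (b.1 - a.1) * (c.2 - a.2) - (b.2 - a.2) * (c.1 - a.1).

Variable n : nat.

Definition general_position (P : 'I_n -> R * R) : Prop :=
  forall i j k : 'I_n, i != j -> j != k -> i != k ->
    orient (P i) (P j) (P k) != 0.

Definition hull_edge (P : 'I_n -> R * R) (i j : 'I_n) : Prop :=
  i != j /\
  ((forall k : 'I_n, 0 <= orient (P i) (P j) (P k)) \/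
   (forall k : 'I_n, orient (P i) (P j) (P k) <= 0)).

Definition edge_val (P v : 'I_n -> R * R) (i j : 'I_n) : R :=
  dot2 (sub2 (P i) (P j)) (sub2 (v i) (v j)).

Definition bounded_set (S : ('I_n -> R * R) -> Prop) : Prop :=
  exists M : R, forall v, S v ->
    forall i : 'I_n, `|(v i).1| <= M /\ `|(v i).2| <= M.

End Defs.

(* normalization v_1^1 = v_1^2 = v_2^1 = 0 (indices 1,2 are ord 0, ord 1) *)
Definition normalized (R : realType) (n : nat) (v : 'I_n.+2 -> R * R) : Prop :=
  (v ord0).1 = 0 /\ (v ord0).2 = 0 /\ (v (inord 1)).1 = 0.

Definition Xbar (R : realType) (n : nat) (P : 'I_n.+2 -> R * R)
  (f : 'I_n.+2 -> 'I_n.+2 -> R) (v : 'I_n.+2 -> R * R) : Prop :=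
  normalized v /\
  forall i j : 'I_n.+2, (i < j)%N -> f i j <= edge_val P v i j.

Definition X (R : realType) (n : nat) (P : 'I_n.+2 -> R * R)
  (f : 'I_n.+2 -> 'I_n.+2 -> R) (v : 'I_n.+2 -> R * R) : Prop :=
  Xbar P f v /\
  forall i j : 'I_n.+2, (i < j)%N -> hull_edge P i j -> edge_val P v i j = f i j.

(* Main.v *)
Require Import Defs.
From HB Require Import structures.
From mathcomp Require Import all_boot all_order all_algebra.
From mathcomp Require Import reals.
From mathcomp Require Import ring lra zify.
From Stdlib Require Import Classical.
Set Implicit Arguments. Unset Strict Implicit. Unset Printing Implicit Defensive.
Import Order.TTheory GRing.Theory Num.Theory.
Local Open Scope ring_scope.

Section Main.
Variable R : realType.
Variable n : nat.
Variable P : 'I_n.+2 -> R * R.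
Variable f : 'I_n.+2 -> 'I_n.+2 -> R.

Definition Vt := 'I_n.+2 -> R * R.
Definition bnd (Q : Vt -> R) := exists B, forall v, X P f v -> `|Q v| <= B.
Definition lbnd (Q : Vt -> R) := exists B, forall v, X P f v -> B <= Q v.
Definition ubnd (Q : Vt -> R) := exists B, forall v, X P f v -> Q v <= B.

Lemma bnd_lu Q : lbnd Q -> ubnd Q -> bnd Q.
Proof.
move=> [a Ha] [b Hb]; exists (`|a| + `|b|) => v Xv.
have := Ha v Xv; have := Hb v Xv; rewrite ler_norml => h1 h2.
apply/andP; split.
  have : - `|a| <= a by rewrite lerNnormlW.
  have := normr_ge0 b. lra.
have := ler_norm b; have := normr_ge0 a; lra.
Qed.

Lemma bnd_l Q : bnd Q -> lbnd Q.
Proof. move=> [B HB]; exists (-B) => v Xv; have := HB v Xv; rewrite ler_norml; by case/andP. Qed.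
Lemma bnd_u Q : bnd Q -> ubnd Q.
Proof. move=> [B HB]; exists B => v Xv; have := HB v Xv; rewrite ler_norml; by case/andP. Qed.

Lemma bnd_ext Q1 Q2 : (forall v, X P f v -> Q1 v = Q2 v) -> bnd Q1 -> bnd Q2.
Proof. move=> E [B HB]; exists B => v Xv; rewrite -E //; exact: HB. Qed.
Lemma lbnd_ext Q1 Q2 : (forall v, X P f v -> Q1 v = Q2 v) -> lbnd Q1 -> lbnd Q2.
Proof. move=> E [B HB]; exists B => v Xv; rewrite -E //; exact: HB. Qed.
Lemma ubnd_ext Q1 Q2 : (forall v, X P f v -> Q1 v = Q2 v) -> ubnd Q1 -> ubnd Q2.
Proof. move=> E [B HB]; exists B => v Xv; rewrite -E //; exact: HB. Qed.

Lemma bnd_c c : bnd (fun _ => c).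
Proof. by exists `|c|. Qed.
Lemma bnd_add Q1 Q2 : bnd Q1 -> bnd Q2 -> bnd (fun v => Q1 v + Q2 v).
Proof.
move=> [a Ha] [b Hb]; exists (a + b) => v Xv.
apply: le_trans (ler_normD _ _) _; apply: lerD; [exact: Ha | exact: Hb].
Qed.
Lemma bnd_opp Q : bnd Q -> bnd (fun v => - Q v).
Proof. by move=> [a Ha]; exists a => v Xv; rewrite normrN; apply: Ha. Qed.
Lemma bnd_sub Q1 Q2 : bnd Q1 -> bnd Q2 -> bnd (fun v => Q1 v - Q2 v).
Proof. by move=> h1 h2; apply: bnd_add => //; apply: bnd_opp. Qed.
Lemma bnd_mul Q1 Q2 : bnd Q1 -> bnd Q2 -> bnd (fun v => Q1 v * Q2 v).
Proof.
move=> [a Ha] [b Hb]; exists (a * b) => v Xv; rewrite normrM.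
apply: ler_pM => //; [exact: Ha | exact: Hb].
Qed.
Lemma bnd_cmul c Q : bnd Q -> bnd (fun v => c * Q v).
Proof. by move=> h; apply: bnd_mul (bnd_c c) h. Qed.
Lemma bnd_mulc c Q : bnd Q -> bnd (fun v => Q v * c).
Proof. by move=> h; apply: bnd_mul h (bnd_c c). Qed.

Lemma lbnd_add Q1 Q2 : lbnd Q1 -> lbnd Q2 -> lbnd (fun v => Q1 v + Q2 v).
Proof. move=> [a Ha] [b Hb]; exists (a + b) => v Xv; apply: lerD; [exact: Ha | exact: Hb]. Qed.
Lemma ubnd_add Q1 Q2 : ubnd Q1 -> ubnd Q2 -> ubnd (fun v => Q1 v + Q2 v).
Proof. move=> [a Ha] [b Hb]; exists (a + b) => v Xv; apply: lerD; [exact: Ha | exact: Hb]. Qed.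
Lemma lbnd_opp Q : ubnd Q -> lbnd (fun v => - Q v).
Proof. move=> [a Ha]; exists (-a) => v Xv; rewrite lerN2; exact: Ha. Qed.
Lemma ubnd_opp Q : lbnd Q -> ubnd (fun v => - Q v).
Proof. move=> [a Ha]; exists (-a) => v Xv; rewrite lerN2; exact: Ha. Qed.

Lemma bnd3 (a b c : R) Q1 Q2 Q3 : 0 < a -> 0 < b -> 0 < c ->
  lbnd Q1 -> lbnd Q2 -> lbnd Q3 ->
  (forall v, X P f v -> a * Q1 v + b * Q2 v + c * Q3 v = 0) ->
  bnd Q1 /\ bnd Q2.
Proof.
move=> ha hb hc [l1 H1] [l2 H2] [l3 H3] E; split; apply: bnd_lu.
- by exists l1.
- exists ((- (b * l2) - c * l3) / a) => v Xv; rewrite ler_pdivlMr //.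
  have := E v Xv; have := H2 v Xv; have := H3 v Xv => h3 h2.
  have : b * l2 <= b * Q2 v by rewrite ler_pM2l.
  have : c * l3 <= c * Q3 v by rewrite ler_pM2l.
  lra.
- by exists l2.
- exists ((- (a * l1) - c * l3) / b) => v Xv; rewrite ler_pdivlMr //.
  have := E v Xv; have := H1 v Xv; have := H3 v Xv => h3 h1.
  have : a * l1 <= a * Q1 v by rewrite ler_pM2l.
  have : c * l3 <= c * Q3 v by rewrite ler_pM2l.
  lra.
Qed.

Definition cr (a b : R * R) := a.1 * b.2 - a.2 * b.1.
Definition g (i j : 'I_n.+2) := if (i < j)%N then f i j else f j i.

Lemma ev_sym v i j : edge_val P v i j = edge_val P v j i.
Proof. rewrite /edge_val /dot2 /sub2 /=; ring. Qed.

Lemma X_ge v i j : X P f v -> i != j -> g i j <= edge_val P v i j.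
Proof.
move=> [[_ Hb] _] ne; rewrite /g; case: (ltngtP i j) => h.
- exact: Hb.
- rewrite ev_sym; exact: Hb.
- by move: ne; rewrite (val_inj h) eqxx.
Qed.

Lemma orient_swap (a b c : R * R) : orient a b c = - orient b a c.
Proof. rewrite /orient; ring. Qed.
Lemma orient_cyc (a b c : R * R) : orient a b c = orient b c a.
Proof. rewrite /orient; ring. Qed.
Lemma orient_swap2 (a b c : R * R) : orient a b c = - orient a c b.
Proof. rewrite /orient; ring. Qed.

Definition validb (k b : 'I_n.+2) :=
  (b != k) && [forall c, 0 <= orient (P k) (P b) (P c)].

Lemma validP k b : validb k b -> b != k /\ forall c, 0 <= orient (P k) (P b) (P c).
Proof. by case/andP=> h1 /forallP h2. Qed.

Lemma X_eq_valid v k b : X P f v -> validb k b -> edge_val P v k b = g k b.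
Proof.
move=> [_ He] /validP [nbk Hc]; rewrite /g; case: (ltngtP k b) => h.
- apply: He => //; split; first by rewrite eq_sym. by left.
- rewrite ev_sym; apply: He => //; split => //; right => c.
  rewrite orient_swap oppr_le0; exact: Hc.
- by move: nbk; rewrite (val_inj h) eqxx.
Qed.

Hypothesis hgp : general_position P.
Hypothesis hn : (0 < n)%N.

Lemma third (i j : 'I_n.+2) : exists k, k != i /\ k != j.
Proof.
have : (0 < #|~: [set i; j]|)%N.
  have := cardsC [set i; j]; rewrite card_ord cards2.
  case: (i != j) => /=; lia.
case/card_gt0P => k; rewrite !inE negb_or => /andP[h1 h2]; by exists k.
Qed.

Lemma pt_inj i j : i != j -> P i != P j.
Proof.
move=> nij; have [k [ki kj]] := third i j; apply/eqP => E.
have jk : j != k by rewrite eq_sym.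
have ik : i != k by rewrite eq_sym.
have := @hgp i j k nij jk ik; rewrite E /orient; by rewrite !subrr !mul0r subrr eqxx.
Qed.

Lemma gp_pos i j k : i != j -> j != k -> i != k ->
  0 <= orient (P i) (P j) (P k) -> 0 < orient (P i) (P j) (P k).
Proof. move=> h1 h2 h3 h; rewrite lt_def h andbT; exact: hgp. Qed.

Lemma nrm_pos (a b : R * R) : a != b -> 0 < (a.1 - b.1) ^+ 2 + (a.2 - b.2) ^+ 2.
Proof.
case: a b => [a1 a2] [b1 b2] /= ne.
have [h|h] := eqVneq a1 b1.
  have h2 : a2 != b2 by apply: contra ne => /eqP ->; rewrite h.
  have : 0 < (a2 - b2) ^+ 2 by rewrite lt_def sqrf_eq0 subr_eq0 h2 /= sqr_ge0.
  rewrite h subrr expr0n /= add0r //.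
have : 0 < (a1 - b1) ^+ 2.
  by rewrite lt_def sqrf_eq0 subr_eq0 h /= sqr_ge0.
have := sqr_ge0 (a2 - b2); lra.
Qed.

Definition HC (u d : R * R) := 0 < cr u d \/ (cr u d = 0 /\ dot2 u d < 0).

Lemma crit_trans (u d1 d2 d3 : R * R) : HC u d1 -> HC u d2 -> HC u d3 ->
  0 <= cr d1 d2 -> 0 <= cr d2 d3 -> 0 <= cr d1 d3.
Proof.
have Id1 : cr u d2 * cr d1 d3 = cr u d1 * cr d2 d3 + cr u d3 * cr d1 d2.
  rewrite /cr; ring.
have Id2 : forall a b, dot2 u u * cr a b = dot2 u a * cr u b - cr u a * dot2 u b.
  move=> a b; rewrite /cr /dot2; ring.
have ge0 : forall d, HC u d -> 0 <= cr u d.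
  by move=> d [h|[h _]]; [exact: ltW | rewrite h].
move=> h1 h2 h3 c12 c23; case: (h2) => [p2|[z2 n2]].
  have : 0 <= cr u d2 * cr d1 d3.
    by rewrite Id1 addr_ge0 // mulr_ge0 // ge0.
  by rewrite pmulr_rge0.
have upos : 0 < dot2 u u.
  have : u != (0, 0).
    apply/eqP => E; move: n2; rewrite E /dot2 /= !mul0r addr0 ltxx //.
  move/(nrm_pos); rewrite /dot2 !subr0 !expr2 //.
have z3 : cr u d3 = 0 /\ dot2 u d3 < 0.
  have := Id2 d2 d3; rewrite z2 mul0r subr0 => E.
  have : 0 <= dot2 u d2 * cr u d3 by rewrite -E mulr_ge0 // ltW.
  move: n2; set a := dot2 u d2; set b := cr u d3 => n2 hab.
  have hb : b <= 0 by nra.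
  case: h3 => [p3|//]; exfalso; move: p3; rewrite -/b; lra.
case: z3 => z3 n3.
have : 0 <= dot2 u u * cr d1 d3.
  rewrite Id2 z3 mulr0 sub0r -mulrN mulr_ge0 // ?ge0 //; lra.
by rewrite pmulr_rge0.
Qed.

Lemma seq_min (T : eqType) (r : rel T) (s : seq T) (x0 : T) : x0 \in s ->
  (forall x y, x \in s -> y \in s -> r x y || r y x) ->
  (forall x y z, x \in s -> y \in s -> z \in s -> r x y -> r y z -> r x z) ->
  exists2 b, b \in s & forall c, c \in s -> r b c.
Proof.
elim: s x0 => [//|x s IH] x0 _ Htot Htr.
have Htot' : forall a b, a \in s -> b \in s -> r a b || r b a.
  by move=> a b ha hb; apply: Htot; rewrite inE ?ha ?hb orbT.
have Htr' : forall a b c, a \in s -> b \in s -> c \in s -> r a b -> r b c -> r a c.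
  by move=> a b c ha hb hc; apply: Htr; rewrite inE ?ha ?hb ?hc orbT.
have rxx : r x x by have := Htot x x; rewrite !inE eqxx /=; case: (r x x) => //; apply.
case: s IH Htot Htr Htot' Htr' => [|y s] IH Htot Htr Htot' Htr'.
  by exists x; rewrite ?inE ?eqxx // => c; rewrite inE => /eqP ->.
have [b bin Hb] := IH y (mem_head _ _) Htot' Htr'.
have xin : x \in x :: y :: s by rewrite inE eqxx.
have bin' : b \in x :: y :: s by rewrite inE bin orbT.
have := Htot x b xin bin'; case/orP => h.
- exists x => // c; rewrite inE => /orP[/eqP -> // | cin].
  apply: (Htr x b c) => //; [by rewrite inE cin orbT | exact: Hb].
- exists b => // c; rewrite inE => /orP[/eqP -> // | cin]; exact: Hb.
Qed.

Definition Cond (k : 'I_n.+2) := exists u, forall c, c != k -> HC u (sub2 (P c) (P k)).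

Lemma cond_valid k : Cond k -> exists b, validb k b.
Proof.
move=> [u Hu].
pose s := [seq c <- enum 'I_n.+2 | c != k].
pose r := fun c1 c2 : 'I_n.+2 => 0 <= cr (sub2 (P c1) (P k)) (sub2 (P c2) (P k)).
have [x0 [x0k _]] := third k k.
have ins : forall c, (c \in s) = (c != k) by move=> c; rewrite mem_filter mem_enum andbT.
have x0s : x0 \in s by rewrite ins.
have tot : forall x y, x \in s -> y \in s -> r x y || r y x.
  move=> x y _ _; rewrite /r.
  set A := cr _ _; have -> : cr (sub2 (P y) (P k)) (sub2 (P x) (P k)) = - A by rewrite /A /cr; ring.
  by rewrite oppr_ge0 le_total.
have tr : forall x y z, x \in s -> y \in s -> z \in s -> r x y -> r y z -> r x z.
  move=> x y z; rewrite !ins => hx hy hz; apply: crit_trans; exact: Hu.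
have [b bin Hb] := @seq_min _ r s x0 x0s tot tr.
exists b; apply/andP; split; first by rewrite -ins.
apply/forallP => c; case: (eqVneq c k) => [->|ck].
  by rewrite /orient !subrr !mulr0 subrr.
have := Hb c; rewrite ins => /(_ ck); rewrite /r /cr /orient /sub2 /=; done.
Qed.

Lemma valid_cond k b : validb k b -> Cond b.
Proof.
move=> /validP [bk Hc]; exists (sub2 (P b) (P k)) => c cb.
have E : cr (sub2 (P b) (P k)) (sub2 (P c) (P b)) = orient (P k) (P b) (P c).
  rewrite /cr /orient /sub2 /=; ring.
rewrite /HC E; have := Hc c; rewrite le_eqVlt => /orP[/eqP h|h]; last by left.
right; split; first by rewrite -h.
case: (eqVneq c k) => [ck|ck]; last first.
  have kb : k != b by rewrite eq_sym.
  have cb' : b != c by rewrite eq_sym.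
  have kc : k != c by rewrite eq_sym.
  by move: (@hgp k b c kb cb' kc); rewrite -h eqxx.
rewrite ck; have := nrm_pos (pt_inj bk); rewrite /dot2 /sub2 /= => hp.
have : 0 < - ((P b).1 - (P k).1) * ((P k).1 - (P b).1) - ((P b).2 - (P k).2) * ((P k).2 - (P b).2).
  move: hp; rewrite !expr2; set x := _ - _; set y := _ - _.
  have -> : (P k).1 - (P b).1 = - x by rewrite /x opprB.
  have -> : (P k).2 - (P b).2 = - y by rewrite /y opprB.
  lra.
lra.
Qed.

Lemma cond_k0 : exists k, Cond k.
Proof.
pose s := enum 'I_n.+2.
pose r := fun c1 c2 : 'I_n.+2 => ((P c2).1 < (P c1).1) || (((P c2).1 == (P c1).1) && ((P c2).2 <= (P c1).2)).
have x0s : ord0 \in s by rewrite mem_enum.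
have tot : forall x y, x \in s -> y \in s -> r x y || r y x.
  move=> x y _ _; rewrite /r /=.
  case: (ltgtP (P y).1 (P x).1) => h.
  - by apply/orP; left; apply/orP; left.
  - by apply/orP; right; apply/orP; left.
  - by case: (le_total (P y).2 (P x).2) => ->; rewrite ?orbT.
have tr : forall x y z, x \in s -> y \in s -> z \in s -> r x y -> r y z -> r x z.
  move=> x y z _ _ _; rewrite /r.
  case/orP=> [h1|/andP[/eqP h1 h1']]; case/orP=> [h2|/andP[/eqP h2 h2']].
  + by rewrite (lt_trans h2 h1).
  + by rewrite h2 h1.
  + by rewrite -h1 h2.
  + by rewrite h2 h1 eqxx (le_trans h2' h1') orbT.
have [b _ Hb] := @seq_min _ r s ord0 x0s tot tr.
exists b; exists (0, 1) => c cb; rewrite /HC /cr /dot2 /sub2 /=.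
have := Hb c (mem_enum _ c); rewrite /r; case/orP => [h|/andP[/eqP h1 h2]].
  by left; lra.
right; split; first by rewrite h1; lra.
have : P c != P b by exact: pt_inj.
case: (P c) (P b) h1 h2 => [c1 c2] [b1 b2] /= -> h2 ne.
have : c2 != b2 by apply: contra ne => /eqP ->.
move: h2; rewrite le_eqVlt => /orP[/eqP -> | h]; first by rewrite eqxx.
by move=> _; lra.
Qed.

Definition nx (k : 'I_n.+2) := odflt k [pick b | validb k b].

Lemma nx_valid k : Cond k -> validb k (nx k).
Proof.
move=> /cond_valid [b hb]; rewrite /nx; case: pickP => [c hc //|none].
by move: (none b); rewrite hb.
Qed.

Lemma collin a k b : validb a k -> validb k b -> a != b.
Proof.
move=> /validP [ka Ha] /validP [bk Hb]; apply/eqP => E; subst b.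
have [c [ca ck]] := third a k.
have ak : a != k by rewrite eq_sym.
have kc : k != c by rewrite eq_sym.
have ac : a != c by rewrite eq_sym.
have := @hgp a k c ak kc ac; have := Ha c; have := Hb c.
rewrite [orient (P k) _ _]orient_swap oppr_ge0 => h1 h2.
have E0 : orient (P a) (P k) (P c) = 0 by apply/eqP; rewrite eq_le h1 h2.
by rewrite E0 eqxx.
Qed.

Lemma orbit : exists (y : nat -> 'I_n.+2) (m : nat),
  [/\ (forall t, validb (y t) (y t.+1)), y m = y 0%N, y m.+1 = y 1%N,
      (forall j, (0 < j < m)%N -> y j != y 0%N) & (2 < m)%N].
Proof.
have [k0 hk0] := cond_k0.
pose x t := iter t nx k0.
have cx : forall t, Cond (x t).
  elim=> [//|t IH]; rewrite /x iterS; apply: (@valid_cond (x t)); exact: nx_valid.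
have vx : forall t, validb (x t) (x t.+1).
  by move=> t; rewrite /x iterS; apply: nx_valid; apply: cx.
pose F := fun i : 'I_n.+3 => x i.
have : ~ injective F.
  move=> /leq_card; rewrite !card_ord => H; have := H; rewrite ltnn.
  done.
move=> ninj.
have [i [j [ij Fij]]] : exists i j, i != j /\ F i = F j.
  apply: NNPP => H; apply: ninj => i j Fij; apply: NNPP => ne; apply: H.
  exists i, j; split => //; by apply/eqP.
have [s [t [st xst]]] : exists s t, (s < t)%N /\ x s = x t.
  case: (ltngtP i j) => h.
  - by exists i, j.
  - by exists j, i.
  - by move: ij; rewrite (val_inj h) eqxx.
pose y t := x (s + t)%N.
have ex : exists m, (0 < m)%N && (y m == y 0%N).
  exists (t - s)%N; rewrite subn_gt0 st /= /y addn0 subnKC ?xst //; exact: ltnW.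
pose m := ex_minn ex.
have [hm hmin] : ((0 < m)%N && (y m == y 0%N)) /\ forall j, (0 < j)%N && (y j == y 0%N) -> (m <= j)%N.
  rewrite /m; case: ex_minnP => mm hmm Hmm; by split.
case/andP: hm => m0 /eqP ym.
have vy : forall t, validb (y t) (y t.+1) by move=> t'; rewrite /y addnS; apply: vx.
have ysucc : forall t, y t.+1 = nx (y t) by move=> t'; rewrite /y addnS /x iterS.
exists y, m; split => //.
- by rewrite ysucc ym -ysucc.
- move=> jj /andP[j0 jm]; apply/negP => /eqP E.
  have := hmin jj; rewrite j0 E eqxx => /(_ isT); lia.
- have y1 : y 1%N != y 0%N by case/validP: (vy 0%N).
  have y2 : y 0%N != y 2%N by apply: (@collin _ (y 1%N)).
  have m1 : m != 1%N by apply: contra y1 => /eqP <-; rewrite ym.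
  have m2 : m != 2%N by apply: contra y2 => /eqP <-; rewrite ym.
  lia.
Qed.

Definition dl (v : Vt) (i j : 'I_n.+2) :=
  cr (sub2 (P j) (P i)) (sub2 (v j) (v i)) / dot2 (sub2 (P j) (P i)) (sub2 (P j) (P i)).
Definition N2 (i j : 'I_n.+2) := dot2 (sub2 (P j) (P i)) (sub2 (P j) (P i)).

Lemma N2_pos i j : i != j -> 0 < N2 i j.
Proof.
move=> ij; have ji : j != i by rewrite eq_sym.
have := nrm_pos (pt_inj ji); rewrite /N2 /dot2 /sub2 /= !expr2 //.
Qed.

Lemma dl_sym v i j : dl v i j = dl v j i.
Proof.
rewrite /dl; congr (_ / _); rewrite /cr /dot2 /sub2 /=; ring.
Qed.

Lemma tri v k a b : a != k -> b != k ->
  edge_val P v a b = edge_val P v k a + edge_val P v k b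
   - dot2 (sub2 (P a) (P k)) (sub2 (P b) (P k)) * (edge_val P v k b / N2 k b + edge_val P v k a / N2 k a)
   + cr (sub2 (P a) (P k)) (sub2 (P b) (P k)) * (dl v k b - dl v k a).
Proof.
move=> ak bk; have ka : k != a by rewrite eq_sym.
have kb : k != b by rewrite eq_sym.
have := N2_pos ka; have := N2_pos kb.
rewrite /dl /N2 /edge_val /cr /dot2 /sub2 /=.
case: (P a) (P b) (P k) (v a) (v b) (v k) => [a1 a2] [b1 b2] [k1 k2] [va1 va2] [vb1 vb2] [vk1 vk2] /= h1 h2.
field; apply/andP; split; exact: lt0r_neq0.
Qed.

Lemma decomp v k b : b != k ->
  (v b).1 - (v k).1 = edge_val P v k b / N2 k b * ((P b).1 - (P k).1) - dl v k b * ((P b).2 - (P k).2) /\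
  (v b).2 - (v k).2 = edge_val P v k b / N2 k b * ((P b).2 - (P k).2) + dl v k b * ((P b).1 - (P k).1).
Proof.
move=> bk; have kb : k != b by rewrite eq_sym.
have := N2_pos kb.
rewrite /dl /N2 /edge_val /cr /dot2 /sub2 /=.
case: (P b) (P k) (v b) (v k) => [b1 b2] [k1 k2] [vb1 vb2] [vk1 vk2] /= h1.
split; field; exact: lt0r_neq0.
Qed.

Section Vel.
Variables (y : nat -> 'I_n.+2) (m : nat).
Hypothesis hv : forall t, validb (y t) (y t.+1).
Hypothesis hym : y m = y 0%N.
Hypothesis hym1 : y m.+1 = y 1%N.
Hypothesis hmin : forall j, (0 < j < m)%N -> y j != y 0%N.
Hypothesis hm2 : (2 < m)%N.

Definition uu v t := dl v (y t) (y t.+1).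
Definition DD v t := uu v t.+1 - uu v t.
Definition om v := uu v 0%N.

Lemma D_ubnd t : ubnd (fun v => DD v t).
Proof.
set a := y t; set k := y t.+1; set b := y t.+2.
have [ka Ha] := validP (hv t); have [bk Hb] := validP (hv t.+1).
rewrite -/a -/k in ka Ha; rewrite -/b -/k in bk Hb.
have ab : a != b by apply: (@collin a k b); [exact: (hv t) | exact: (hv t.+1)].
have ak : a != k by rewrite eq_sym.
set u := sub2 (P a) (P k); set w := sub2 (P b) (P k).
have gam : cr u w < 0.
  have -> : cr u w = - orient (P a) (P k) (P b) by rewrite /u /w /cr /orient /sub2 /=; ring.
  rewrite oppr_lt0; apply: gp_pos => //; first by rewrite eq_sym.
set C := g a k + g k b - dot2 u w * (g k b / N2 k b + g a k / N2 k a).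
exists ((g a b - C) / cr u w) => v Xv.
rewrite ler_ndivlMr //.
have E := tri v ak bk; rewrite -/u -/w in E.
have Eka : edge_val P v k a = g a k by rewrite ev_sym; exact: X_eq_valid Xv (hv t).
have Ekb : edge_val P v k b = g k b by exact: X_eq_valid Xv (hv t.+1).
have Eab := X_ge Xv ab.
have ED : DD v t = dl v k b - dl v k a by rewrite /DD /uu [dl v (y t) _]dl_sym.
rewrite ED; move: E Eab; rewrite Eka Ekb /C => E; rewrite E.
rewrite [_ * cr u w]mulrC; lra.
Qed.

Definition FF v t := uu v t - om v.

Lemma F_ubnd t : ubnd (fun v => FF v t).
Proof.
elim: t => [|t IH]; first by exists 0 => v _; rewrite /FF /om subrr.
apply: ubnd_ext (ubnd_add IH (D_ubnd t)) => v _; rewrite /FF /DD; ring.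
Qed.

Lemma G_ubnd k : forall t, (t + k = m)%N -> ubnd (fun v => uu v m - uu v t).
Proof.
elim: k => [|k IH] t htk.
  by rewrite addn0 in htk; rewrite htk; exists 0 => v _; rewrite subrr.
have h : (t.+1 + k = m)%N by rewrite addSn -addnS.
apply: ubnd_ext (ubnd_add (D_ubnd t) (IH _ h)) => v _; rewrite /DD; ring.
Qed.

Lemma F_bnd t : (t <= m)%N -> bnd (fun v => FF v t).
Proof.
move=> tm; apply: bnd_lu; last exact: F_ubnd.
have h : (t + (m - t) = m)%N by rewrite subnKC.
apply: lbnd_ext (lbnd_opp (G_ubnd h)) => v _.
have -> : uu v m = om v by rewrite /uu /om hym hym1.
rewrite /FF; ring.
Qed.

Definition Z1 v c := (v c).1 - (v (y 0%N)).1 + om v * ((P c).2 - (P (y 0%N)).2).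
Definition Z2 v c := (v c).2 - (v (y 0%N)).2 - om v * ((P c).1 - (P (y 0%N)).1).

Lemma Zorb t : (t <= m)%N -> bnd (fun v => Z1 v (y t)) /\ bnd (fun v => Z2 v (y t)).
Proof.
elim: t => [|t IH] tm.
  by split; apply: bnd_ext (bnd_c 0) => v _; rewrite /Z1 /Z2; ring.
have [IH1 IH2] := IH (ltnW tm).
have FB := F_bnd (ltnW tm).
have [bk _] := validP (hv t).
set k := y t in bk IH1 IH2 *; set b := y t.+1 in bk *.
set d1 := (P b).1 - (P k).1; set d2 := (P b).2 - (P k).2.
set e := g k b / N2 k b.
split.
- apply: bnd_ext (bnd_add (bnd_add IH1 (bnd_c (e * d1))) (bnd_opp (bnd_mulc d2 FB))) => v Xv.
  have [E1 _] := decomp v bk; rewrite (X_eq_valid Xv (hv t)) -/k -/b -/d1 -/d2 -/e in E1.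
  have hu : dl v k b = uu v t by [].
  rewrite hu in E1; apply/eqP; rewrite -subr_eq0; apply/eqP.
  transitivity ((e * d1 - uu v t * d2) - ((v b).1 - (v k).1)); last by rewrite E1 subrr.
  rewrite /Z1 /FF /d1 /d2 /k /b; ring.
- apply: bnd_ext (bnd_add (bnd_add IH2 (bnd_c (e * d2))) (bnd_mulc d1 FB)) => v Xv.
  have [_ E2] := decomp v bk; rewrite (X_eq_valid Xv (hv t)) -/k -/b -/d1 -/d2 -/e in E2.
  have hu : dl v k b = uu v t by [].
  rewrite hu in E2; apply/eqP; rewrite -subr_eq0; apply/eqP.
  transitivity ((e * d2 + uu v t * d1) - ((v b).2 - (v k).2)); last by rewrite E2 subrr.
  rewrite /Z2 /FF /d1 /d2 /k /b; ring.
Qed.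

Lemma disc_ivt (h : nat -> R) j : (1 <= j)%N -> h j <= 0 -> 0 < h 1%N ->
  exists t, [/\ (1 <= t)%N, (t < j)%N, 0 < h t & h t.+1 <= 0].
Proof.
elim: j => [//|j IH] _ hj h1.
case: (posnP j) => [j0|jp].
  by subst j; move: hj; rewrite leNgt h1.
case: (lerP (h j) 0) => hj'.
  have [t [t1 tj ht ht1]] := IH jp hj' h1; exists t; split => //; exact: ltnW.
by exists j.
Qed.

Definition LL v c x := ((P c).1 - (P x).1) * Z1 v c + ((P c).2 - (P x).2) * Z2 v c.

Lemma LL_lbnd c x : c != x -> bnd (fun v => Z1 v x) -> bnd (fun v => Z2 v x) ->
  lbnd (fun v => LL v c x).
Proof.
move=> cx b1 b2.
have E0 : lbnd (fun v => edge_val P v c x) by exists (g c x) => v Xv; exact: X_ge Xv cx.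
have H := lbnd_add (lbnd_add E0
   (bnd_l (bnd_cmul ((P c).1 - (P x).1) b1))) (bnd_l (bnd_cmul ((P c).2 - (P x).2) b2)).
apply: lbnd_ext H => v _; rewrite /LL /Z1 /Z2 /edge_val /dot2 /sub2 /=; ring.
Qed.

Lemma Z_nonorb c : (forall t, (t < m)%N -> y t != c) ->
  bnd (fun v => Z1 v c) /\ bnd (fun v => Z2 v c).
Proof.
move=> nc.
pose h t := orient (P (y 0%N)) (P (y t)) (P c).
have m0 : (0 < m)%N by apply: leq_ltn_trans hm2.
have c0 : y 0%N != c by apply: nc.
have c1 : y 1%N != c by apply: nc; apply: leq_ltn_trans hm2.
have h1 : 0 < h 1%N.
  have [y10 H] := validP (hv 0); apply: gp_pos => //; first by rewrite eq_sym.
have hm1 : h m.-1 <= 0.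
  have [_ H] := validP (hv m.-1); move: (H c); rewrite prednK // hym.
  by move=> H0; rewrite /h orient_swap oppr_le0.
have m11 : (1 <= m.-1)%N by move: hm2; case: (m) => [|[|[|k]]].
have [t [t1 tm ht ht1]] := disc_ivt m11 hm1 h1.
have tlt : (t < m)%N := leq_trans tm (leq_pred m).
have t1lt : (t.+1 < m)%N by have : (t.+1 < m.-1.+1)%N := tm; rewrite prednK.
set a := y 0%N; set b := y t; set d := y t.+1.
have ba : b != a by apply: hmin; rewrite t1 tlt.
have da : d != a by apply: hmin; rewrite t1lt.
have [db Hbd] := validP (hv t); rewrite -/b -/d in db Hbd.
have cb : b != c by apply: nc.
have cd : d != c by apply: nc.
have ab : a != b by rewrite eq_sym.
have ad : a != d by rewrite eq_sym.
have bd : b != d by rewrite eq_sym.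
have ca : c != a by rewrite eq_sym.
have cb' : c != b by rewrite eq_sym.
have cd' : c != d by rewrite eq_sym.
have al : 0 < orient (P b) (P d) (P c) by apply: gp_pos.
have be : 0 < orient (P a) (P c) (P d).
  rewrite orient_swap2 oppr_gt0 lt_def ht1 andbT eq_sym; exact: hgp.
have ga : 0 < orient (P a) (P b) (P c) by [].
have [Za1 Za2] := Zorb (leq0n m).
have tm1 : (t <= m)%N := ltnW tlt.
have tm2 : (t.+1 <= m)%N := ltnW t1lt.
have [Zb1 Zb2] := Zorb tm1.
have [Zd1 Zd2] := Zorb tm2.
have Esum : forall v, X P f v -> orient (P b) (P d) (P c) * LL v c a + orient (P a) (P c) (P d) * LL v c b
     + orient (P a) (P b) (P c) * LL v c d = 0.
  move=> v _; rewrite /LL /orient.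
  move: (Z1 v c) (Z2 v c) (P a) (P b) (P c) (P d) => z1 z2 [a1 a2] [b1 b2] [q1 q2] [d1 d2] /=.
  ring.
have [La Lb] := @bnd3 _ _ _ (fun v => LL v c a) (fun v => LL v c b) (fun v => LL v c d) al be ga
   (LL_lbnd ca Za1 Za2) (LL_lbnd cb' Zb1 Zb2) (LL_lbnd cd' Zd1 Zd2) Esum.
have det0 : ((P c).1 - (P a).1) * ((P c).2 - (P b).2) - ((P c).2 - (P a).2) * ((P c).1 - (P b).1) != 0.
  have -> : ((P c).1 - (P a).1) * ((P c).2 - (P b).2) - ((P c).2 - (P a).2) * ((P c).1 - (P b).1)
     = orient (P a) (P b) (P c) by rewrite /orient; ring.
  exact: lt0r_neq0.
set det := _ - _ in det0.
split.
- apply: bnd_ext (bnd_mulc det^-1 (bnd_sub (bnd_mulc ((P c).2 - (P b).2) La) (bnd_mulc ((P c).2 - (P a).2) Lb))) => v _.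
  rewrite /LL /det; move: det0; rewrite /det.
  move: (Z1 v c) (Z2 v c) (P a) (P b) (P c) => z1 z2 [a1 a2] [b1 b2] [q1 q2] /= d0.
  field; exact: d0.
- apply: bnd_ext (bnd_mulc det^-1 (bnd_sub (bnd_cmul ((P c).1 - (P a).1) Lb) (bnd_cmul ((P c).1 - (P b).1) La))) => v _.
  rewrite /LL /det; move: det0; rewrite /det.
  move: (Z1 v c) (Z2 v c) (P a) (P b) (P c) => z1 z2 [a1 a2] [b1 b2] [q1 q2] /= d0.
  field; exact: d0.
Qed.

Lemma Z_all c : bnd (fun v => Z1 v c) /\ bnd (fun v => Z2 v c).
Proof.
case: (classic (exists t, (t < m)%N /\ y t = c)) => [[t [tm <-]]|H].
  exact: Zorb (ltnW tm).
apply: Z_nonorb => t tm; apply/eqP => E; apply: H; by exists t.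
Qed.

Hypothesis hp : (P ord0).2 != (P (inord 1)).2.

Lemma v_bnd c : bnd (fun v => (v c).1) /\ bnd (fun v => (v c).2).
Proof.
set i1 : 'I_n.+2 := inord 1.
have nz : (P i1).2 - (P ord0).2 != 0 by rewrite subr_eq0 eq_sym.
have [Z01 Z02] := Z_all ord0; have [Z11 _] := Z_all i1; have [Zc1 Zc2] := Z_all c.
have bom : bnd om.
  apply: bnd_ext (bnd_mulc ((P i1).2 - (P ord0).2)^-1 (bnd_sub Z11 Z01)) => v [[[n1 [n2 n3]] _] _].
  rewrite /Z1 n1 n3; field; exact: nz.
set y0 := y 0%N.
have by1 : bnd (fun v => (v y0).1).
  apply: bnd_ext (bnd_add (bnd_opp Z01) (bnd_mulc ((P ord0).2 - (P y0).2) bom)) => v [[[n1 [n2 n3]] _] _].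
  rewrite /Z1 n1; ring.
have by2 : bnd (fun v => (v y0).2).
  apply: bnd_ext (bnd_sub (bnd_opp Z02) (bnd_mulc ((P ord0).1 - (P y0).1) bom)) => v [[[n1 [n2 n3]] _] _].
  rewrite /Z2 n2; ring.
split.
- apply: bnd_ext (bnd_sub (bnd_add Zc1 by1) (bnd_mulc ((P c).2 - (P y0).2) bom)) => v _.
  rewrite /Z1; ring.
- apply: bnd_ext (bnd_add (bnd_add Zc2 by2) (bnd_mulc ((P c).1 - (P y0).1) bom)) => v _.
  rewrite /Z2; ring.
Qed.

End Vel.
End Main.

Lemma I2_cases (k : 'I_2) : k = ord0 \/ k = inord 1.
Proof.
case: k => [[|[|k']] hk].
- by left; apply: val_inj.
- by right; apply: val_inj; rewrite /= inordK.
- by [].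
Qed.

(* P = {p_1, ..., p_{n+2}}: n.+2 points, p_1 = P ord0, p_2 = P (inord 1). *)
Theorem lemma3p4 (R : realType) (n : nat) (P : 'I_n.+2 -> R * R)
  (f : 'I_n.+2 -> 'I_n.+2 -> R) :
  general_position P ->
  (P ord0).2 != (P (inord 1)).2 ->
  bounded_set (X P f).
Proof.
move: P f; case: n => [|n'] P f hgp hp.
  set i1 : 'I_2 := inord 1.
  exists `|f ord0 i1 / ((P ord0).2 - (P i1).2)| => v [[[n1 [n2 n3]] _] He] i.
  have o1 : ((ord0 : 'I_2) < i1)%N by rewrite /i1 inordK.
  have hull : hull_edge P ord0 i1.
    split; first by rewrite -val_eqE /= /i1 inordK.
    left => k; case: (I2_cases k) => ->; rewrite /orient.
    + by rewrite !subrr !mulr0 subrr.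
    + by rewrite [X in _ - X]mulrC subrr.
  have E := He ord0 i1 o1 hull.
  move: E; rewrite /edge_val /dot2 /sub2 /= n1 n2 n3 => E.
  have nz : (P ord0).2 - (P i1).2 != 0 by rewrite subr_eq0.
  have v2 : (v i1).2 = - (f ord0 i1 / ((P ord0).2 - (P i1).2)).
    rewrite -E; field; exact: nz.
  case: (I2_cases i) => ->.
  + by rewrite n1 n2 normr0 normr_ge0.
  + by rewrite n3 v2 normr0 normrN normr_ge0.

have hn : (0 < n'.+1)%N by [].
have [y [m [hv hym hym1 hmin hm2]]] := orbit hgp hn.
have H : forall c, exists B, forall v, X P f v -> `|(v c).1| <= B /\ `|(v c).2| <= B.
  move=> c; have [[B1 H1] [B2 H2]] := v_bnd f hgp hn hv hym hym1 hmin hm2 hp c.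
  exists (Num.max B1 B2) => v Xv; split.
  - by apply: le_trans (H1 v Xv) _; rewrite le_max lexx.
  - by apply: le_trans (H2 v Xv) _; rewrite le_max lexx orbT.
have [Bf HB] := fin_all_exists H.
exists (\sum_c `|Bf c|) => v Xv i.
have le : Bf i <= \sum_c `|Bf c|.
  apply: le_trans (ler_norm _) _; rewrite (bigD1 i) //=.
  by rewrite lerDl sumr_ge0.
have [h1 h2] := HB i v Xv; split; exact: le_trans le.
Qed.
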